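(* Let $f_1,\dots,f_k$ be nonnegative, monotonically nondecreasing convex functions, let $d_{ij}\ge 0$ for $i\in[n]$, $j\in[k]$, and let $\mathcal{P}\subseteq[0,1]^n$ be a polytope. Consider the integer program $$\min \sum_{j\in[k]} f_j\Big(\sum_{i\in[n]} d_{ij}y_i\Big)\quad\text{s.t. } y\in\mathcal{P},\ y\in\{0,1\}^n,$$ with optimal value $IP$, and the linear program (in variables $y\in\mathbb{R}^n$ and $z_{jS}$ for $j\in[k]$, $S\subseteq[n]$) $$\min \sum_{j\in[k]}\sum_{S\subseteq[n]} f_j\Big(\sum_{i\in S}d_{ij}\Big)z_{jS}$$ subject to $y\in\mathcal{P}$; $\sum_{S\subseteq[n]}z_{jS}=1$ for all $j\in[k]$; $\sum_{S: i\in S} z_{jS}=y_i$ for all $i\in[n]$, $j\in[k]$; $z_{jS}\ge 0$ for all $S,j$. Let $D_j=\{i: d_{ij}\ne 0\}$. Assume there is a randomized algorithm $R$ that, given $y\in\mathcal{P}$, returns a random point $R(y)\in\mathcal{P}\cap\{0,1\}^n$ such that (1) $\Pr(R_i(y)=1)=y_i$ for all $i$, where $R_i(y)$ is the $i$-th coordinate of $R(y)$; and (2) for every $j$, the random variables $\{R_i(y)\}_{i\in D_j}$ are independent or negatively associated. Then for every feasible solution $(y^*,z^* )$ of the linear program, $$\mathbb{E}\Big[\sum_{j\in[k]} f_j\Big(\sum_{i\in[n]} d_{ij}R_i(y^* )\Big)\Big]\le \sum_{j\in[k]} A(f_j)\sum_{S\subseteq[n]} f_j\Big(\sum_{i\in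 S}d_{ij}\Big)z^*_{jS}.$$ In particular, if $(y^*,z^* )$ is a $(1+\varepsilon)$-approximately optimal solution to the linear program, then $$\mathbb{E}\Big[\sum_{j\in[k]} f_j\Big(\sum_{i\in[n]} d_{ij}R_i(y^* )\Big)\Big]\le (1+\varepsilon)\max_j A(f_j)\cdot IP.$$
   Context: For a convex nondecreasing function $f$, $A(f)=\sup_{t>0}\mathbb{E}\big[f(tP)/f(t)\big]$, where $P$ is a Poisson random variable with parameter $1$; for $f(t)=ct^q$ one has $A(f)=A_q=\mathbb{E}[P^q]$. Random variables $X_1,\dots,X_m$ are negatively associated if for all disjoint $I,J\subseteq[m]$ and all nondecreasing functions $f:\mathbb{R}^I\to\mathbb{R}$, $g:\mathbb{R}^J\to\mathbb{R}$, $\mathbb{E}[f(X_i,i\in I)\,g(X_j,j\in J)]\le \mathbb{E}[f(X_i,i\in I)]\,\mathbb{E}[g(X_j,j\in J)]$. *)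

(* Defs.v *)
From HB Require Import structures.
From mathcomp Require Import all_boot all_order all_algebra.
From mathcomp Require Import all_classical all_reals all_analysis.
Set Implicit Arguments. Unset Strict Implicit. Unset Printing Implicit Defensive.
Import Order.TTheory GRing.Theory Num.Theory.
Local Open Scope classical_set_scope.
Local Open Scope ring_scope.

Section defs.
Variable R : realType.

Definition nonneg_nondec_convex (f : R -> R) : Prop :=
  (forall t, 0 <= t -> 0 <= f t) /\
  (forall s t, 0 <= s -> s <= t -> f s <= f t) /\
  (forall s t (l : R), 0 <= s -> 0 <= t -> 0 <= l -> l <= 1 ->
      f (l * s + (1 - l) * t) <= l * f s + (1 - l) * f t).

Definition Aconst (f : R -> R) : \bar R :=
  ereal_sup [set (\sum_(0 <= m <oo) (poisson_pmf 1 m * (f (t * m%:R) / f t))%:E)%E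
            | t in [set t : R | 0 < t]].

Definition polytope (n m : nat) (a : 'I_m -> 'I_n -> R) (b : 'I_m -> R)
  : set ('I_n -> R) :=
  [set y | forall l, \sum_(i < n) a l i * y i <= b l].

Definition ind (n : nat) (x : {ffun 'I_n -> bool}) : 'I_n -> R :=
  fun i => (x i)%:R.

Definition is_pmf (n : nat) (mu : {ffun 'I_n -> bool} -> R) : Prop :=
  (forall x, 0 <= mu x) /\ \sum_x mu x = 1.

Definition Ex (n : nat) (mu : {ffun 'I_n -> bool} -> R)
  (g : ('I_n -> R) -> R) : R :=
  \sum_x mu x * g (ind x).

Definition prob1 (n : nat) (mu : {ffun 'I_n -> bool} -> R) (i : 'I_n) : R :=
  \sum_(x : {ffun 'I_n -> bool} | x i) mu x.

Definition indep_on (n : nat) (mu : {ffun 'I_n -> bool} -> R)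
  (D : {set 'I_n}) : Prop :=
  forall a : 'I_n -> bool,
    \sum_(x : {ffun 'I_n -> bool} | [forall i in D, x i == a i]) mu x =
    \prod_(i in D) \sum_(x : {ffun 'I_n -> bool} | x i == a i) mu x.

(* the coordinates {X_i}_{i in D} are negatively associated:
   a function g : R^n -> R that is nondecreasing w.r.t. the coordinates in I
   (i.e. u_i <= v_i for all i in I implies g u <= g v) is exactly a
   nondecreasing function of (X_i, i in I). *)
Definition nondec_on (n : nat) (I : {set 'I_n}) (g : ('I_n -> R) -> R) :=
  forall u v : 'I_n -> R, (forall i, i \in I -> u i <= v i) -> g u <= g v.

Definition neg_assoc_on (n : nat) (mu : {ffun 'I_n -> bool} -> R)
  (D : {set 'I_n}) : Prop :=
  forall I J : {set 'I_n}, I \subset D -> J \subset D -> I :&: J = finset.set0 ->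
  forall g h : ('I_n -> R) -> R, nondec_on I g -> nondec_on J h ->
    Ex mu (fun u => g u * h u) <= Ex mu g * Ex mu h.

Definition ip_obj (n k : nat) (f : 'I_k -> R -> R) (d : 'I_n -> 'I_k -> R)
  (y : 'I_n -> R) : R :=
  \sum_(j < k) f j (\sum_(i < n) d i j * y i).

Definition lp_cost (n k : nat) (f : 'I_k -> R -> R) (d : 'I_n -> 'I_k -> R)
  (z : 'I_k -> {set 'I_n} -> R) (j : 'I_k) : R :=
  \sum_(S : {set 'I_n}) f j (\sum_(i in S) d i j) * z j S.

Definition lp_obj (n k : nat) (f : 'I_k -> R -> R) (d : 'I_n -> 'I_k -> R)
  (z : 'I_k -> {set 'I_n} -> R) : R :=
  \sum_(j < k) lp_cost f d z j.

Definition lp_feasible (n k : nat) (P : set ('I_n -> R))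
  (y : 'I_n -> R) (z : 'I_k -> {set 'I_n} -> R) : Prop :=
  P y /\
  (forall j, \sum_(S : {set 'I_n}) z j S = 1) /\
  (forall i j, \sum_(S : {set 'I_n} | i \in S) z j S = y i) /\
  (forall j S, 0 <= z j S).

(* optimal values (infima; +oo if infeasible) *)
Definition IPval (n k : nat) (P : set ('I_n -> R)) (f : 'I_k -> R -> R)
  (d : 'I_n -> 'I_k -> R) : \bar R :=
  ereal_inf [set (ip_obj f d (ind x))%:E | x in [set x | P (ind x)]].

Definition LPval (n k : nat) (P : set ('I_n -> R)) (f : 'I_k -> R -> R)
  (d : 'I_n -> 'I_k -> R) : \bar R :=
  ereal_inf [set (lp_obj f d yz.2)%:E
            | yz in [set yz : ('I_n -> R) * ('I_k -> {set 'I_n} -> R)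
                    | lp_feasible P yz.1 yz.2]].

End defs.

(* Main.v *)
Require Import Defs.
From HB Require Import structures.
From mathcomp Require Import all_boot all_order all_algebra.
From mathcomp Require Import all_classical all_reals all_analysis.
From mathcomp Require Import ring lra.
Import Order.TTheory GRing.Theory Num.Theory.
Local Open Scope classical_set_scope.
Local Open Scope ring_scope.
Set Implicit Arguments. Unset Strict Implicit. Unset Printing Implicit Defensive.

Section Elist.
Variable R : realType.
Implicit Types (G : R -> R) (a b c e p : R) (l : seq (R * R)).

Fixpoint Elist (G : R -> R) (l : seq (R * R)) (a : R) : R :=
  match l with
  | [::] => G a
  | pc :: l' => (1 - pc.1) * Elist G l' a + pc.1 * Elist G l' (a + pc.2)
  end.

Definition okp (pc : R * R) : bool := (0 <= pc.1 <= 1) && (0 <= pc.2).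

Definition Inc (G : R -> R) : Prop :=
  forall a c e, 0 <= a -> 0 <= c -> 0 <= e -> G (a + c) + G (a + e) <= G a + G (a + c + e).

Lemma Elist_cat G l1 l2 a : Elist G (l1 ++ l2) a = Elist (Elist G l2) l1 a.
Proof. by elim: l1 a => [|pc l1 IH] a //=; rewrite !IH. Qed.

Lemma Elist_mono G G' l a : all okp l -> 0 <= a ->
  (forall b, 0 <= b -> G b <= G' b) -> Elist G l a <= Elist G' l a.
Proof.
elim: l a => [|[p c] l IH] a /=; first by move=> _ a0 H; exact: H.
move=> /andP[/andP[/andP[/= p0 p1] c0] okl] a0 H.
have h1 := IH a okl a0 H.
have h2 := IH (a + c) okl (addr_ge0 a0 c0) H.
have q0 : 0 <= 1 - p by lra.
by rewrite lerD // ler_wpM2l.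
Qed.

Lemma Inc_shift G c : 0 <= c -> Inc G -> Inc (fun b => G (b + c)).
Proof.
move=> c0 HG a c' e a0 c'0 e0 /=.
have := HG (a + c) c' e (addr_ge0 a0 c0) c'0 e0.
have -> : a + c' + c = a + c + c' by ring.
have -> : a + e + c = a + c + e by ring.
by have -> : a + c' + e + c = a + c + c' + e by ring.
Qed.

Lemma Inc_Elist G l : all okp l -> Inc G -> Inc (Elist G l).
Proof.
elim: l G => [|[p c] l IH] G //= /andP[/andP[/andP[/= p0 p1] c0] okl] HG.
move=> a c' e a0 c'0 e0.
have h1 := IH G okl HG a c' e a0 c'0 e0.
have h2 := @Inc_shift _ c c0 (IH G okl HG) a c' e a0 c'0 e0; simpl in h2.
have q0 : 0 <= 1 - p by lra.
nra.
Qed.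

Lemma Elist_swap G x y l a : Elist G (x :: y :: l) a = Elist G (y :: x :: l) a.
Proof.
case: x => p c; case: y => q d /=.
rewrite (addrAC a d c); ring.
Qed.

Lemma Elist_insert G x l1 l2 a :
  Elist G (x :: l1 ++ l2) a = Elist G (l1 ++ x :: l2) a.
Proof.
elim: l1 a => [|y l1 IH] a //.
by rewrite Elist_swap [in RHS]/= -!IH.
Qed.

Lemma Elist_interleave (T : Type) G (u v : T -> R * R) (s : seq T) a :
  Elist G (flatten [seq [:: u i; v i] | i <- s]) a =
  Elist G ([seq u i | i <- s] ++ [seq v i | i <- s]) a.
Proof.
elim: s a => [|i s IH] a //=.
by rewrite -!Elist_insert /= !IH.
Qed.

Lemma Elist_split2 G p q c l a : 0 <= p -> 0 <= q -> 0 <= c -> 0 <= a ->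
  Inc (Elist G l) ->
  Elist G ((p + q, c) :: l) a <= Elist G ((p, c) :: (q, c) :: l) a.
Proof.
move=> p0 q0 c0 a0 H /=.
have := H a c c a0 c0 c0.
have := mulr_ge0 p0 q0.
nra.
Qed.

Lemma all_okp_map (T : Type) (s : seq T) (h : T -> R * R) :
  (forall i, okp (h i)) -> all okp [seq h i | i <- s].
Proof. by move=> H; elim: s => //= i s ->; rewrite H. Qed.

Lemma Elist_split_list (T : Type) G (p q c : T -> R) (s : seq T) a :
  Inc G -> (forall i, 0 <= p i) -> (forall i, 0 <= q i) ->
  (forall i, p i + q i <= 1) -> (forall i, 0 <= c i) -> 0 <= a ->
  Elist G [seq (p i + q i, c i) | i <- s] a <=
  Elist G (flatten [seq [:: (p i, c i); (q i, c i)] | i <- s]) a.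
Proof.
move=> HG p0 q0 pq1 c0.
have okl : forall s', all okp [seq (p i + q i, c i) | i <- s'].
  move=> s'; apply: all_okp_map => i; rewrite /okp /= c0 pq1 addr_ge0 //.
have okf : forall s', all okp (flatten [seq [:: (p i, c i); (q i, c i)] | i <- s']).
  elim=> [|i s' IH] //=; rewrite IH /okp /= c0 p0 q0 /=.
  have h1 := pq1 i; have h2 := p0 i; have h3 := q0 i.
  have e1 : p i <= 1 by lra.
  have e2 : q i <= 1 by lra.
  by rewrite e1 e2.
elim: s a => [|i s IH] a a0 //=.
apply: le_trans (Elist_split2 (p0 i) (q0 i) (c0 i) a0 (Inc_Elist (okl s) HG)) _.
have okh : all okp [:: (p i, c i); (q i, c i)].
  have h1 := pq1 i; have h2 := p0 i; have h3 := q0 i; have h4 := c0 i.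
  have e1 : p i <= 1 by lra.
  have e2 : q i <= 1 by lra.
  by rewrite /= /okp /= h2 h3 h4 e1 e2.
have := Elist_mono okh a0 IH.
move=> H; exact: H.
Qed.

Lemma Elist_group (T : Type) G (P : pred T) z (c : T -> R) (s : seq T) a :
  Inc G -> 0 <= z <= 1 -> (forall i, 0 <= c i) -> 0 <= a ->
  Elist G [seq (if P i then z else 0, c i) | i <- s] a <=
  (1 - z) * G a + z * G (a + \sum_(i <- s | P i) c i).
Proof.
move=> HG /andP[z0 z1] c0.
elim: s a => [|i s IH] a a0 /=.
  rewrite big_nil addr0; lra.
rewrite big_cons; case: (P i) => /=; last first.
  by rewrite subr0 mul1r mul0r addr0; exact: IH.
have h1 := IH a a0.
have h2 := IH (a + c i) (addr_ge0 a0 (c0 i)).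
have h3 := HG a (c i) (\sum_(j <- s | P j) c j) a0 (c0 i) (sumr_ge0 _ (fun j _ => c0 j)).
rewrite addrA.
have q0 : 0 <= 1 - z by lra.
have zz := mulr_ge0 z0 q0.
nra.
Qed.

Lemma L2gen (T : finType) G (items : seq T) (ss : seq {set T}) (z : {set T} -> R)
  (c : T -> R) a :
  Inc G -> (forall X, 0 <= z X <= 1) -> (forall i, 0 <= c i) -> 0 <= a ->
  (forall i, \sum_(X <- ss) (if i \in X then z X else 0) <= 1) ->
  Elist G [seq (\sum_(X <- ss) (if i \in X then z X else 0), c i) | i <- items] a <=
  Elist G [seq (z X, \sum_(i <- items | i \in X) c i) | X <- ss] a.
Proof.
move=> HG z01 c0; elim: ss a => [|S0 ss IH] a a0 y1 /=.
  under eq_map do rewrite big_nil.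
  elim: items a a0 {y1} => [|i s IHs] a a0 //=.
  by rewrite subr0 mul1r mul0r addr0 IHs.
set y' := fun i => \sum_(X <- ss) (if i \in X then z X else 0).
have y'0 : forall i, 0 <= y' i.
  by move=> i; apply: sumr_ge0 => X _; case: ifP => _ //; case/andP: (z01 X).
have p0 : forall i, 0 <= (if i \in S0 then z S0 else 0).
  by move=> i; case: ifP => _ //; case/andP: (z01 S0).
have y'1 : forall i, y' i <= 1.
  move=> i; have := y1 i; rewrite big_cons -/(y' i); have := p0 i; lra.
have pq1 : forall i, (if i \in S0 then z S0 else 0) + y' i <= 1.
  by move=> i; have := y1 i; rewrite big_cons.
have HH := Elist_split_list (p := fun i => if i \in S0 then z S0 else 0) (q := y') items HG p0 y'0 pq1 c0 a0.
have -> : [seq (\sum_(X <- S0 :: ss) (if i \in X then z X else 0), c i) | i <- items] = [seq ((if i \in S0 then z S0 else 0) + y' i, c i) | i <- items].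
  by apply: eq_map => i; rewrite big_cons.
apply: le_trans HH _.
rewrite Elist_interleave Elist_cat.
have okl : all okp [seq (y' i, c i) | i <- items].
  by apply: all_okp_map => i; rewrite /okp /= c0 y'0 y'1.
apply: le_trans (Elist_group (fun i => i \in S0) items (Inc_Elist okl HG) (z01 S0) c0 a0) _.
have H1 := IH a a0 y'1.
have H2 := IH _ (addr_ge0 a0 (sumr_ge0 _ (fun i _ => c0 i))) y'1.
rewrite /= in H1 H2 *.
case/andP: (z01 S0) => z0 z1.
have q0 : 0 <= 1 - z S0 by lra.
by apply: lerD; apply: ler_wpM2l.
Qed.

End Elist.
Arguments okp {R}.

Section Ser.
Variable R : realType.
Implicit Types (w a b c : R).
Local Open Scope ereal_scope.

Definition pp w (j : nat) : R := (w ^+ j / j`!%:R * expR (- w))%R.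

Lemma pp_ge0 w j : (0 <= w)%R -> (0 <= pp w j)%R.
Proof. by move=> w0; rewrite /pp !mulr_ge0 ?invr_ge0 ?exprn_ge0 ?expR_ge0. Qed.

Lemma exp_series w : (0 <= w)%R ->
  \sum_(j <oo) ((w ^+ j / j`!%:R)%:E) = (expR w)%:E.
Proof.
move=> w0.
rewrite expRE -EFin_lim; last first.
  rewrite /pseries/=; under eq_fun do rewrite mulrC.
  exact: is_cvg_series_exp_coeff.
apply/congr_lim/funext => n/=; rewrite /pseries/= /series/= -sumEFin//.
by under eq_bigr do rewrite mulrC.
Qed.

Lemma pp_sum w : (0 <= w)%R -> \sum_(j <oo) (pp w j)%:E = 1.
Proof.
move=> w0.
under eq_eseriesr do rewrite /pp EFinM muleC.
rewrite nneseriesZl; last by move=> i _; rewrite lee_fin divr_ge0 ?exprn_ge0.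
by rewrite exp_series // -EFinM -expRD addNr expR0.
Qed.

Lemma pp_mean w : (0 <= w)%R -> \sum_(j <oo) (j%:R * pp w j)%:E = w%:E.
Proof.
move=> w0.
rewrite nneseries_recl //; last by move=> k _; rewrite lee_fin mulr_ge0 ?pp_ge0.
rewrite mul0r add0e -nneseries_addn; last by move=> k; rewrite lee_fin mulr_ge0 ?pp_ge0.
transitivity (\sum_(i <oo) (w%:E * (pp w i)%:E)).
  apply: eq_eseriesr => i _; rewrite -EFinM; congr (_%:E).
  rewrite /pp addn1 factS exprS natrM.
  have h : ((i.+1)%:R : R) != 0%R by rewrite pnatr_eq0.
  have h2 : ((i`!)%:R : R) != 0%R by rewrite pnatr_eq0 -lt0n fact_gt0.
  rewrite invfM; field.
  by rewrite h2 nat1r h.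
by rewrite (@nneseriesZl _ _ xpredT) ?pp_sum ?mule1 // => i _; rewrite lee_fin pp_ge0.
Qed.

Lemma eq_ser (f g : nat -> \bar R) : (forall i, f i = g i) ->
  \sum_(i <oo) f i = \sum_(i <oo) g i.
Proof. by move=> e; rewrite (_ : f = g) //; apply/funext. Qed.

Lemma serZl (f : nat -> \bar R) x : (forall i, 0 <= f i) ->
  \sum_(i <oo) (x%:E * f i) = x%:E * \sum_(i <oo) f i.
Proof. by move=> f0; rewrite (@nneseriesZl _ _ xpredT). Qed.

Lemma serD (f g : nat -> \bar R) : (forall i, 0 <= f i) -> (forall i, 0 <= g i) ->
  \sum_(i <oo) (f i + g i) = \sum_(i <oo) f i + \sum_(i <oo) g i.
Proof. by move=> f0 g0; rewrite (@nneseriesD _ _ _ xpredT). Qed.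

Lemma le_ser (f g : nat -> \bar R) : (forall i, 0 <= f i) -> (forall i, f i <= g i) ->
  \sum_(i <oo) f i <= \sum_(i <oo) g i.
Proof. by move=> f0 fg; apply: (@lee_nneseries _ _ _ xpredT). Qed.

Lemma ser_ge0 (f : nat -> \bar R) : (forall i, 0 <= f i) -> 0 <= \sum_(i <oo) f i.
Proof. by move=> f0; apply: nneseries_ge0. Qed.

Lemma tangent_pp w (H : nat -> R) : (0 <= w)%R ->
  (forall j, 0 <= H j)%R -> (H 0 <= H 1)%R ->
  (forall j, H 1 - H 0 <= H j.+1 - H j)%R ->
  ((1 - w) * H 0 + w * H 1)%:E <= \sum_(j <oo) (pp w j * H j)%:E.
Proof.
move=> w0 H0 H01 Hinc.
have Hlb : forall j, (H 0 + j%:R * (H 1 - H 0) <= H j)%R.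
  elim=> [|j IH]; first by rewrite mul0r addr0.
  have := Hinc j; rewrite -addn1 natrD mulrDl mul1r; lra.
apply: le_trans (_ : \sum_(j <oo) ((pp w j * H 0)%:E + (j%:R * pp w j)%:E * (H 1 - H 0)%:E) <= _).
  rewrite serD; last 2 first.
  - by move=> i; rewrite lee_fin mulr_ge0 ?pp_ge0.
  - move=> i; have hp := pp_ge0 i w0; rewrite -EFinM lee_fin.
    by apply: mulr_ge0; [exact: mulr_ge0 | rewrite subr_ge0].
  under eq_ser do rewrite EFinM muleC.
  rewrite serZl; last by move=> i; rewrite lee_fin pp_ge0.
  under [X in _ <= _ + X]eq_ser do rewrite muleC.
  rewrite serZl; last by move=> i; rewrite lee_fin mulr_ge0 ?pp_ge0.
  rewrite pp_sum // pp_mean // mule1 -!EFinM -EFinD lee_fin; lra.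
apply: le_ser.
  move=> i; have hp := pp_ge0 i w0; rewrite -EFinM -EFinD lee_fin.
  by apply: addr_ge0; [exact: mulr_ge0 | apply: mulr_ge0; [exact: mulr_ge0 | rewrite subr_ge0]].
move=> j; rewrite -EFinM -EFinD lee_fin.
have := Hlb j; have := pp_ge0 j w0 => p0 h.
have -> : (pp w j * H 0 + j%:R * pp w j * (H 1 - H 0) = pp w j * (H 0 + j%:R * (H 1 - H 0)))%R by ring.
exact: ler_wpM2l.
Qed.

End Ser.

Section Pois.
Variable R : realType.
Implicit Types (w a b c : R) (G : R -> R) (l : seq (R * R)).

Fixpoint Sm G l (m : nat) (a : R) : R :=
  match m with
  | 0 => G a
  | m'.+1 => \sum_(pc <- l) pc.1 * Sm G l m' (a + pc.2)
  end.

Definition lam l : R := \sum_(pc <- l) pc.1.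

Definition qq l (m : nat) : R := expR (- lam l) / m`!%:R.

Definition Theta G l a : \bar R := (\sum_(m <oo) (qq l m * Sm G l m a)%:E)%E.

Definition Gok G := [/\ (forall t, 0 <= t -> 0 <= G t),
  (forall s t, 0 <= s -> s <= t -> G s <= G t) & Inc G].

Lemma qq_ge0 l m : 0 <= qq l m.
Proof. by rewrite /qq divr_ge0 ?expR_ge0. Qed.

Lemma Sm_ge0 G l m a : Gok G -> all okp l -> 0 <= a -> 0 <= Sm G l m a.
Proof.
case=> G0 _ _ okl; elim: m a => [|m IH] a a0 /=; first exact: G0.
rewrite big_seq; apply: sumr_ge0 => -[p c] /= pcl.
have /andP[/andP[/andP[p0 _] c0]] : okp (p, c) && true by rewrite (allP okl).
by move=> _; rewrite mulr_ge0 // IH // addr_ge0.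
Qed.

Lemma Sm_mono G l m a b : Gok G -> all okp l -> 0 <= a -> a <= b ->
  Sm G l m a <= Sm G l m b.
Proof.
case=> G0 Gm _ okl; elim: m a b => [|m IH] a b a0 ab /=; first exact: Gm.
rewrite !big_seq; apply: ler_sum => -[p c] /= pcl.
have /andP[/andP[/andP[p0 _] c0]] : okp (p, c) && true by rewrite (allP okl).
by move=> _; rewrite ler_wpM2l // IH ?addr_ge0 // lerD2r.
Qed.

Lemma Sm_Inc G l m : Gok G -> all okp l -> Inc (Sm G l m).
Proof.
case=> G0 Gm GI okl; elim: m => [|m IH] //=.
move=> a c e a0 c0 e0.
rewrite !big_seq -!big_split /=; apply: ler_sum => -[p d] /= pcl.
have /andP[/andP[/andP[p0 _] d0]] : okp (p, d) && true by rewrite (allP okl).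
move=> _; rewrite -!mulrDr; apply: ler_wpM2l => //.
have := Inc_shift d0 IH a0 c0 e0 => /=.
have -> : a + c + d = a + d + c by ring.
have -> : a + e + d = a + d + e by ring.
by have -> : a + c + e + d = a + d + c + e by ring.
Qed.

Lemma Sm_binom G w c l m a :
  Sm G ((w, c) :: l) m a =
  \sum_(0 <= j < m.+1) ('C(m, j)%:R * w ^+ j * Sm G l (m - j) (a + j%:R * c)).
Proof.
elim: m a => [|m IH] a.
  by rewrite big_nat1 /= bin0 mul0r addr0 !mul1r.
rewrite [LHS]/= big_cons /=.
rewrite IH.
under eq_bigr do rewrite IH.
have T2 : \sum_(pc <- l) pc.1 * \sum_(0 <= j < m.+1)
      ('C(m, j)%:R * w ^+ j * Sm G l (m - j) (a + pc.2 + j%:R * c)) =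
    \sum_(0 <= j < m.+1) ('C(m, j)%:R * w ^+ j * Sm G l (m - j).+1 (a + j%:R * c)).
  under eq_bigr do rewrite big_distrr.
  rewrite exchange_big /=; apply: eq_bigr => j _ /=.
  rewrite big_distrr /=; apply: eq_bigr => -[p d] _ /=.
  by rewrite (addrAC a d); ring.
rewrite T2 {T2}.
rewrite big_distrr /=.
set A_ := \sum_(0 <= j < m.+1) _.
set B_ := \sum_(0 <= j < m.+1) _.
set C_ := \sum_(0 <= j < m) ('C(m, j.+1)%:R * w ^+ j.+1 * Sm G l (m - j) (a + (j.+1)%:R * c)).
have hB : B_ = Sm G l m.+1 a + C_.
  rewrite /B_ big_nat_recl // bin0 expr0 mul0r addr0 !mul1r subn0; congr (_ + _).
  by apply: eq_big_nat => j /andP[_ jm]; rewrite -(subnSK jm).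
have hR : \sum_(0 <= j < m.+2) ('C(m.+1, j)%:R * w ^+ j * Sm G l (m.+1 - j) (a + j%:R * c))
    = Sm G l m.+1 a + (C_ + A_).
  rewrite big_nat_recl // bin0 expr0 mul0r addr0 !mul1r subn0; congr (_ + _).
  under eq_bigr do rewrite binS natrD !mulrDl.
  rewrite big_split /=; congr (_ + _).
    by rewrite big_nat_recr //= bin_small // !mul0r addr0.
  apply: eq_bigr => j _; rewrite subSS exprS -[(j.+1)%:R]natr1.
  rewrite (_ : a + (j%:R + 1) * c = a + c + j%:R * c); last by ring.
  ring.
rewrite hB hR; ring.
Qed.

Local Open Scope ereal_scope.

Lemma cauchy_ser (u : nat -> nat -> \bar R) : (forall i j, 0 <= u i j) ->
  \sum_(m <oo) \sum_(0 <= j < m.+1) u j (m - j)%N =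
  \sum_(j <oo) \sum_(r <oo) u j r.
Proof.
move=> u0.
have fin : forall m, \sum_(0 <= j < m.+1) u j (m - j)%N =
    \sum_(j <oo) (if (j <= m)%N then u j (m - j)%N else 0).
  move=> m; rewrite [RHS](@nneseries_split _ (fun j => if (j <= m)%N then u j (m - j)%N else 0) 0 m.+1); last by move=> k _; case: ifPn.
  rewrite add0n [X in _ = _ + X]eseries0 ?adde0; last first.
    by move=> i /= mi _; rewrite leqNgt mi.
  by apply: eq_big_nat => j /andP[_ jm]; rewrite ltnS in jm; rewrite jm.
under eq_ser do rewrite fin.
rewrite (@nneseries_interchange _ (fun m j => if (j <= m)%N then u j (m - j)%N else 0) xpredT xpredT); last by move=> i j; case: ifPn.
apply: eq_ser => j.
rewrite (@nneseries_split _ (fun m => if (j <= m)%N then u j (m - j)%N else 0) 0 j); last by move=> k _; case: ifPn.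
rewrite add0n big1_seq ?add0e; last first.
  by move=> i /andP[_]; rewrite mem_index_iota => /andP[_ ij]; rewrite leqNgt ij.
rewrite -nneseries_addn; last by move=> k; case: ifPn.
by apply: eq_ser => i; rewrite leq_addl addnK.
Qed.

Lemma fact_neq0 n : ((n`!)%:R : R) != 0%R.
Proof. by rewrite pnatr_eq0 -lt0n fact_gt0. Qed.

Lemma Theta_cons G w c l a : (0 <= w)%R -> (0 <= c)%R -> Gok G -> all okp l -> (0 <= a)%R ->
  Theta G ((w, c) :: l) a =
  \sum_(j <oo) \sum_(r <oo) (pp w j * (qq l r * Sm G l r (a + j%:R * c)))%:E.
Proof.
move=> w0 c0 Gk okl a0.
have ac j : (0 <= a + j%:R * c)%R by rewrite addr_ge0 // mulr_ge0.
rewrite /Theta -cauchy_ser; last first.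
  move=> i j; rewrite lee_fin; apply: mulr_ge0; first exact: pp_ge0.
  by apply: mulr_ge0; [exact: qq_ge0 | exact: Sm_ge0].
apply: eq_ser => m.
rewrite Sm_binom big_distrr /= -sumEFin.
apply: eq_big_nat => j /andP[_]; rewrite ltnS => jm; congr (_%:E).
rewrite /qq /pp /lam big_cons /= opprD expRD.
have hb := bin_fact jm.
rewrite -hb natrM natrM.
have hc : ('C(m, j)%:R : R) != 0%R by rewrite pnatr_eq0 -lt0n bin_gt0.
have h1 := fact_neq0 j; have h2 := fact_neq0 (m - j).
field.
by rewrite hc h1 h2.
Qed.


Lemma Elist_Theta G l a : Gok G -> all okp l -> (0 <= a)%R ->
  (Elist G l a)%:E <= Theta G l a.
Proof.
move=> Gk; elim: l a => [|[w c] l IH] a.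
  move=> _ a0 /=; rewrite /Theta (@nneseries_recl _ xpredT) //; last first.
    move=> k _; rewrite lee_fin; apply: mulr_ge0; first exact: qq_ge0.
    by case: k => [|k] /=; [case: Gk => G0 _ _; exact: G0 a0 | rewrite big_nil].
  rewrite eseries0 ?adde0; last by move=> k k1 _; case: k k1 => [|k] //= _; rewrite big_nil mulr0.
  by rewrite /qq /lam big_nil oppr0 expR0 /= divr1 mul1r.
move=> /= /andP[/andP[/andP[/= w0 w1] c0] okl] a0.
rewrite Theta_cons //.
set H := fun r (j : nat) => (qq l r * Sm G l r (a + j%:R * c))%R.
have H0 r j : (0 <= H r j)%R.
  by rewrite /H mulr_ge0 ?qq_ge0 // Sm_ge0 // addr_ge0 // mulr_ge0.
rewrite (@nneseries_interchange _ (fun j r => (pp w j * H r j)%:E) xpredT xpredT); last first.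
  by move=> i j; rewrite lee_fin mulr_ge0 ?pp_ge0.
apply: le_trans (_ : \sum_(r <oo) ((1 - w) * H r 0 + w * H r 1)%:E <= _); last first.
  apply: le_ser.
    by move=> r; rewrite lee_fin addr_ge0 // mulr_ge0 // subr_ge0.
  move=> r; apply: tangent_pp => //.
    rewrite /H ler_wpM2l ?qq_ge0 // Sm_mono // ?mul0r ?addr0 //.
    by rewrite mul1r lerDl.
  move=> j; rewrite /H -!mulrBr ler_wpM2l ?qq_ge0 //.
  have := Sm_Inc r Gk okl a0 c0 (mulr_ge0 (ler0n _ j) c0).
  rewrite mul0r addr0 mul1r -[(j.+1)%:R]natr1.
  have -> : (a + (j%:R + 1) * c = a + c + j%:R * c)%R by ring.
  move=> h; lra.
under eq_ser do rewrite EFinD.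
rewrite serD; last 2 first.
- by move=> r; rewrite lee_fin mulr_ge0 // subr_ge0.
- by move=> r; rewrite lee_fin mulr_ge0.
under eq_ser do rewrite EFinM.
rewrite serZl; last by move=> r; rewrite lee_fin.
under [X in _ <= _ + X]eq_ser do rewrite EFinM.
rewrite serZl; last by move=> r; rewrite lee_fin.
rewrite EFinD !EFinM; apply: leeD; apply: lee_wpmul2l; rewrite ?lee_fin ?subr_ge0 //.
  rewrite /H; under eq_ser do rewrite mul0r addr0.
  exact: IH.
rewrite /H; under eq_ser do rewrite mul1r.
by apply: IH => //; rewrite addr_ge0.
Qed.

Local Close Scope ereal_scope.

Lemma ler_sum_seq (I : eqType) (r : seq I) (F1 F2 : I -> R) :
  (forall i, i \in r -> F1 i <= F2 i) -> \sum_(i <- r) F1 i <= \sum_(i <- r) F2 i.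
Proof.
move=> H; rewrite [leLHS]big_seq_cond [leRHS]big_seq_cond.
by apply: ler_sum => i /andP[ir _]; exact: H.
Qed.

Definition cvx (F : R -> R) := forall s t (x : R), 0 <= s -> 0 <= t -> 0 <= x -> x <= 1 ->
  F (x * s + (1 - x) * t) <= x * F s + (1 - x) * F t.

Lemma Sm_jensen F l m a : cvx F -> all okp l -> lam l = 1 -> 0 <= a ->
  Sm F l m a <= \sum_(pc <- l) pc.1 * F (a + m%:R * pc.2).
Proof.
move=> Fc okl hl; elim: m a => [|m IH] a a0 /=.
  under eq_bigr do rewrite mul0r addr0.
  by rewrite -big_distrl /= -/(lam l) hl mul1r.
have okpc : forall pc, pc \in l -> 0 <= pc.1 /\ 0 <= pc.2.
  move=> [p c] pcl; have := allP okl _ pcl; rewrite /okp /=.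
  by case/andP => /andP[-> _] ->.
set al := ((m.+1)%:R : R)^-1.
have m1 : ((m.+1)%:R : R) != 0 by rewrite pnatr_eq0.
have al0 : 0 <= al by rewrite invr_ge0.
have al1 : al <= 1 by rewrite invf_le1 // ?ler1n // ltr0n.
set X := fun pc : R * R => F (a + m.+1%:R * pc.2).
set M := \sum_(pc <- l) pc.1 * X pc.
apply: le_trans (_ : \sum_(pc <- l) pc.1 * \sum_(pc' <- l) pc'.1 * (al * X pc + (1 - al) * X pc') <= _).
  apply: ler_sum_seq => pc pcl; have [p0 c0] := okpc _ pcl.
  apply: ler_wpM2l => //; apply: le_trans (IH _ (addr_ge0 a0 c0)) _.
  apply: ler_sum_seq => pc' pc'l; have [p0' c0'] := okpc _ pc'l.
  apply: ler_wpM2l => //; rewrite /X.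
  have -> : a + pc.2 + m%:R * pc'.2 =
      al * (a + m.+1%:R * pc.2) + (1 - al) * (a + m.+1%:R * pc'.2).
    rewrite /al -natr1; field.
    by rewrite natr1.
  by apply: Fc => //; rewrite addr_ge0 // mulr_ge0.
have inner : forall pc, \sum_(pc' <- l) pc'.1 * (al * X pc + (1 - al) * X pc') =
    al * X pc + (1 - al) * M.
  move=> pc; rewrite (eq_bigr (fun pc' => al * X pc * pc'.1 + (1 - al) * (pc'.1 * X pc'))); last by move=> *; ring.
  by rewrite big_split /= -!big_distrr /= -/(lam l) hl mulr1.
under eq_bigr do rewrite inner.
rewrite (eq_bigr (fun pc => al * (pc.1 * X pc) + (1 - al) * M * pc.1)); last by move=> *; ring.
by rewrite big_split /= -!big_distrr /= -/(lam l) hl mulr1 -/M; rewrite le_eqVlt; apply/orP; left; apply/eqP; ring.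
Qed.

End Pois.

Section Indep.
Variables (R : realType) (n : nat).
Notation FF := {ffun 'I_n -> bool}.
Implicit Types (mu : FF -> R) (D : {set 'I_n}).

Definition nrm D (x : FF) : FF := [ffun l => (l \in D) && x l].

Lemma nrm_pred D (x b : FF) :
  ((b == nrm D b) && [forall l in D, x l == b l]) = (b == nrm D x).
Proof.
apply/andP/eqP.
  case=> /eqP bE /forall_inP H; apply/ffunP => l; rewrite bE !ffunE.
  by case: (boolP (l \in D)) => // lD; rewrite (eqP (H l lD)).
move=> ->; split; first by apply/eqP/ffunP => l; rewrite !ffunE andbA andbb.
by apply/forall_inP => l lD; rewrite ffunE lD.
Qed.

Lemma sum_nrm mu D (phi : FF -> R) : (forall x, phi x = phi (nrm D x)) ->
  \sum_x mu x * phi x =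
  \sum_(b | b == nrm D b) phi b * \sum_(x : FF | [forall l in D, x l == b l]) mu x.
Proof.
move=> Hphi.
under [RHS]eq_bigr do rewrite big_distrr.
rewrite (exchange_big_dep xpredT) //=.
apply: eq_bigr => x _.
rewrite (eq_bigl (fun b => b == nrm D x)); last by move=> b; rewrite nrm_pred.
by rewrite big_pred1_eq mulrC -Hphi.
Qed.

Definition fl (i : 'I_n) (b : FF) : FF := [ffun l => if l == i then ~~ b l else b l].

Lemma flK i : involutive (fl i).
Proof.
by move=> b; apply/ffunP => l; rewrite !ffunE; case: eqP => // _; rewrite negbK.
Qed.


Lemma indep_peel mu D i (h : FF -> R) :
  is_pmf mu -> indep_on mu D -> i \in D ->
  (forall b b' : FF, (forall l, l \in D -> l != i -> b l = b' l) -> h b = h b') ->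
  \sum_x mu x * ((x i)%:R * h x) = prob1 mu i * \sum_x mu x * h x.
Proof.
move=> [mu0 mu1] Hind iD Hh.
have Hn : forall x, h x = h (nrm D x).
  by move=> x; apply: Hh => l lD _; rewrite ffunE lD.
set q := fun l (be : bool) => \sum_(x : FF | x l == be) mu x.
have Hpr : forall b : FF, \sum_(x : FF | [forall l in D, x l == b l]) mu x =
    q i (b i) * \prod_(l in D | l != i) q l (b l).
  by move=> b; rewrite Hind (bigD1 i).
rewrite (@sum_nrm mu D (fun x => (x i)%:R * h x)); last first.
  by move=> x; rewrite -Hn ffunE iD.
rewrite (@sum_nrm mu D h) //.
set P := fun b : FF => b == nrm D b.
set W := fun b : FF => h b * \prod_(l in D | l != i) q l (b l).
have e1 : \sum_(b | P b) (b i)%:R * h b * \sum_(x : FF | [forall l in D, x l == b l]) mu x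
    = q i true * \sum_(b | P b) (b i)%:R * W b.
  rewrite big_distrr; apply: eq_bigr => b _; rewrite Hpr /W.
  by case: (b i) => /=; ring.
have e2 : \sum_(b | P b) h b * \sum_(x : FF | [forall l in D, x l == b l]) mu x
    = q i true * \sum_(b | P b) (b i)%:R * W b + q i false * \sum_(b | P b) (~~ b i)%:R * W b.
  rewrite !big_distrr -big_split; apply: eq_bigr => b _; rewrite Hpr /W.
  by case: (b i) => /=; ring.
have e3 : \sum_(b | P b) (~~ b i)%:R * W b = \sum_(b | P b) (b i)%:R * W b.
  rewrite (reindex_inj (inv_inj (flK i))) /=.
  apply: eq_big => b.
    rewrite /P; apply/eqP/eqP => /ffunP E; apply/ffunP => l; move: (E l);
      rewrite !ffunE; case: (l =P i) => [->|_]; rewrite ?iD //.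
  move=> _; rewrite ffunE eqxx negbK; congr (_ * _).
  rewrite /W; congr (_ * _).
    by apply: Hh => l _ li; rewrite ffunE (negbTE li).
  by apply: eq_bigr => l /andP[_ li]; rewrite ffunE (negbTE li).
have qq1 : q i true + q i false = 1.
  rewrite -mu1 (bigID (fun x : FF => x i == true)) /=; congr (_ + _).
  by apply: eq_bigl => x; case: (x i).
have qp : q i true = prob1 mu i by apply: eq_bigl => x; case: (x i).
by rewrite e1 e2 e3 -mulrDl qq1 mul1r qp.
Qed.

Definition peel mu D (y : 'I_n -> R) := forall i (J : {set 'I_n}) (h : ('I_n -> R) -> R),
  i \in D -> J \subset D -> i \notin J -> nondec_on J h ->
  \sum_x mu x * ((x i)%:R * h (ind R x)) <= y i * \sum_x mu x * h (ind R x).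

Lemma Ex_prob1 mu i : Ex mu (fun u => u i) = prob1 mu i.
Proof.
rewrite /Ex /prob1 [RHS]big_mkcond /=; apply: eq_bigr => x _.
by rewrite /ind; case: (x i); rewrite ?mulr1 ?mulr0.
Qed.

Lemma NA_peel mu D y : neg_assoc_on mu D -> (forall i, prob1 mu i = y i) -> peel mu D y.
Proof.
move=> NA py i J h iD JD iJ hJ.
have I0 : [set i]%SET :&: J = finset.set0.
  apply/setP => l; rewrite !inE; case: eqP => // ->; by rewrite (negbTE iJ).
have gm : nondec_on [set i]%SET (fun u : 'I_n -> R => u i).
  by move=> u v H; apply: H; rewrite inE.
have := NA [set i]%SET J _ JD I0 _ _ gm hJ.
rewrite finset.sub1set iD => /(_ isT).
by rewrite Ex_prob1 py /Ex.
Qed.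

Lemma indep_peel' mu D y : is_pmf mu -> indep_on mu D -> (forall i, prob1 mu i = y i) ->
  peel mu D y.
Proof.
move=> pm Hind py i J h iD JD iJ hJ.
rewrite -py (indep_peel (h := fun x => h (ind R x)) pm Hind iD) //.
move=> b b' H; apply/le_anti/andP; split; apply: hJ => l lJ;
  (have lD : l \in D by exact: (fintype.subsetP JD));
  (have li : l != i by apply: contraNneq iJ => <-);
  by rewrite /ind H.
Qed.

Lemma L1 mu D y (c : 'I_n -> R) G (T : seq 'I_n) a :
  peel mu D y -> \sum_x mu x = 1 -> (forall i, 0 <= y i <= 1) -> Inc G ->
  (forall l, 0 <= c l) -> uniq T -> {subset T <= D} -> 0 <= a ->
  \sum_x mu x * G (a + \sum_(l <- T) c l * (x l)%:R) <=
  Elist G [seq (y l, c l) | l <- T] a.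
Proof.
move=> Hp mu1 y01 HG c0; elim: T a => [|i T IH] a /=.
  move=> _ _ a0; under eq_bigr do rewrite big_nil addr0.
  by rewrite -big_distrl /= mu1 mul1r.
move=> /andP[iT uT] sT a0.
have sT' : {subset T <= D} by move=> l lT; apply: sT; rewrite inE lT orbT.
have iD : i \in D by apply: sT; rewrite inE eqxx.
set Vp := fun u : 'I_n -> R => \sum_(l <- T) c l * Num.max (u l) 0.
have Vp0 : forall u, 0 <= Vp u.
  by move=> u; rewrite /Vp big_seq; apply: sumr_ge0 => l _; rewrite mulr_ge0 // le_max lexx orbT.
have Vpx : forall x : FF, Vp (ind R x) = \sum_(l <- T) c l * (x l)%:R.
  by move=> x; apply: eq_bigr => l _; rewrite /ind max_l.
set hR := fun u => G (a + c i + Vp u) - G (a + Vp u).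
have hJ : nondec_on [set l in T]%SET hR.
  move=> u v H; rewrite /hR.
  have Vuv : Vp u <= Vp v.
    rewrite /Vp; apply: ler_sum_seq => l lT; apply: ler_wpM2l => //.
    by apply: le_max2 => //; apply: H; rewrite inE.
  have := HG (a + Vp u) (c i) (Vp v - Vp u) (addr_ge0 a0 (Vp0 u)) (c0 i).
  rewrite subr_ge0 => /(_ Vuv).
  have -> : a + Vp u + (Vp v - Vp u) = a + Vp v by ring.
  have -> : a + Vp u + c i + (Vp v - Vp u) = a + c i + Vp v by ring.
  have -> : a + Vp u + c i = a + c i + Vp u by ring.
  lra.
have := Hp i [set l in T]%SET hR iD _ _ hJ.
have -> : [set l in T]%SET \subset D by apply/fintype.subsetP => l; rewrite inE => /sT'.
rewrite inE iT => /(_ isT isT) Hpeel.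
have split1 : \sum_x mu x * G (a + \sum_(l <- i :: T) c l * (x l)%:R) =
    \sum_x mu x * G (a + \sum_(l <- T) c l * (x l)%:R) +
    \sum_x mu x * ((x i)%:R * hR (ind R x)).
  rewrite -big_split /=; apply: eq_bigr => x _.
  rewrite big_cons /hR Vpx.
  by case: (x i) => /=; rewrite ?mulr1 ?mulr0 ?mul1r ?mul0r ?add0r ?addr0 ?addrA //; ring.
rewrite split1.
have hsum : \sum_x mu x * hR (ind R x) =
    \sum_x mu x * G (a + c i + \sum_(l <- T) c l * (x l)%:R) -
    \sum_x mu x * G (a + \sum_(l <- T) c l * (x l)%:R).
  rewrite -sumrB; apply: eq_bigr => x _; rewrite /hR Vpx; ring.
rewrite hsum in Hpeel.
have H1 := IH a uT sT' a0.
have H2 := IH (a + c i) uT sT' (addr_ge0 a0 (c0 i)).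
have /andP[y0 y1] := y01 i.
have q0 : 0 <= 1 - y i by lra.
have e1 := ler_wpM2l q0 H1.
have e2 := ler_wpM2l y0 H2.
lra.
Qed.

End Indep.

Section Final.
Variable R : realType.

Lemma cvx_Inc (F : R -> R) : cvx F -> Inc F.
Proof.
move=> Fc a c e a0 c0 e0.
have [ce0|ce0] := eqVneq (c + e) 0.
  have c00 : c = 0 by lra.
  have e00 : e = 0 by lra.
  by rewrite c00 e00 !addr0; apply: lexx.
have cep : 0 < c + e by rewrite lt_def ce0 /= addr_ge0.
set la := e / (c + e).
have la0 : 0 <= la by rewrite divr_ge0 // ltW.
have la1 : la <= 1 by rewrite ler_pdivrMr // mul1r; lra.
have h1 := Fc a (a + c + e) la a0 (addr_ge0 (addr_ge0 a0 c0) e0) la0 la1.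
have h2 := Fc a (a + c + e) (1 - la) a0 (addr_ge0 (addr_ge0 a0 c0) e0)
  ltac:(lra) ltac:(lra).
have E1 : a + c = la * a + (1 - la) * (a + c + e).
  by rewrite /la; field; rewrite ce0.
have E2 : a + e = (1 - la) * a + (1 - (1 - la)) * (a + c + e).
  by rewrite /la; field; rewrite ce0.
set T := a + c + e in h1 h2 E1 E2 *.
rewrite E1 E2; lra.
Qed.

Lemma nnc_Gok (F : R -> R) : nonneg_nondec_convex F -> Gok F /\ cvx F.
Proof.
case=> F0 [Fm Fc]; split => //; split => //; exact: cvx_Inc.
Qed.

Lemma pp1E (m : nat) : poisson_pmf 1 m = pp (1 : R) m.
Proof. by rewrite /poisson_pmf ltr01 /pp. Qed.

Local Open Scope ereal_scope.

Lemma Aconst_ge1 (F : R -> R) : nonneg_nondec_convex F -> (forall t, (0 < t)%R -> (0 < F t)%R) ->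
  1 <= Aconst F.
Proof.
move=> /nnc_Gok [[F0 Fm FI] Fc] Fp.
have F1 : (0 < F 1)%R := Fp 1%R ltr01.
apply: le_trans (_ : \sum_(m <oo) (poisson_pmf 1 m * (F (1 * m%:R) / F 1))%:E <= _); last first.
  by apply: ereal_sup_ubound; exists 1%R => //=; rewrite ltr01.
under eq_ser do rewrite pp1E mul1r.
set H := fun j : nat => (F (j%:R) / F 1)%R.
have := @tangent_pp R 1 H ler01.
rewrite subrr mul0r add0r mul1r /H mulr1n divff ?gt_eqF // => h; apply: h.
- by move=> j; rewrite divr_ge0 // ?F0 // ltW.
- by rewrite mulr0n ler_pdivrMr // mul1r Fm // ler01.
- move=> j.
  have -> : (1 - F 0%:R / F 1 = (F 1 - F 0%:R) / F 1)%R.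
    by field; rewrite gt_eqF.
  rewrite -!mulrBl ler_pM2r ?invr_gt0 //.
  have := FI 0%R 1%R j%:R (lexx _) ler01 (ler0n _ _).
  rewrite !add0r mulr0n -natr1 [(1 + _)%R]addrC; lra.
Qed.

Lemma Psi_le (F : R -> R) t : nonneg_nondec_convex F -> (forall t, (0 < t)%R -> (0 < F t)%R) ->
  (0 <= t)%R ->
  \sum_(m <oo) (poisson_pmf 1 m * F (t * m%:R))%:E <= Aconst F * (F t)%:E.
Proof.
move=> Fn Fp t0.
have [[F0 Fm FI] Fc] := nnc_Gok Fn.
have [->|tn0] := eqVneq t 0%R.
  under eq_ser do rewrite mul0r pp1E.
  under eq_ser do rewrite EFinM muleC.
  rewrite serZl; last by move=> i; rewrite lee_fin pp_ge0.
  rewrite pp_sum ?ler01 // mule1.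
  apply: le_trans (_ : 1 * (F 0)%:E <= _); first by rewrite mul1e.
  by apply: lee_wpmul2r; [rewrite lee_fin F0 | exact: Aconst_ge1].
have tp : (0 < t)%R by rewrite lt_def tn0.
have Ftp := Fp t tp.
rewrite muleC.
have -> : \sum_(m <oo) (poisson_pmf 1 m * F (t * m%:R))%:E =
    (F t)%:E * \sum_(m <oo) (poisson_pmf 1 m * (F (t * m%:R) / F t))%:E.
  rewrite -serZl; last first.
    move=> m; rewrite lee_fin mulr_ge0 ?poisson_pmf_ge0 // divr_ge0 // ?F0 ?mulr_ge0 // ltW.
  apply: eq_ser => m; rewrite -EFinM; congr (_%:E); field.
  by rewrite gt_eqF.
apply: lee_wpmul2l; first by rewrite lee_fin ltW.
by apply: ereal_sup_ubound; exists t.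
Qed.

Local Close Scope ereal_scope.

Lemma per_j n (F : R -> R) (dj : 'I_n -> R) (mu : {ffun 'I_n -> bool} -> R)
  (y : 'I_n -> R) (zj : {set 'I_n} -> R) :
  nonneg_nondec_convex F -> (forall t, (0 < t)%R -> (0 < F t)%R) ->
  (forall i, (0 <= dj i)%R) -> (forall i, (0 <= y i <= 1)%R) ->
  is_pmf mu -> (forall i, prob1 mu i = y i) ->
  indep_on mu (finset (fun i => dj i != 0)) \/ neg_assoc_on mu (finset (fun i => dj i != 0)) ->
  (forall S, 0 <= zj S) -> \sum_S zj S = 1 ->
  (forall i, \sum_(S : {set 'I_n} | i \in S) zj S = y i) ->
  ((\sum_x mu x * F (\sum_i dj i * (x i)%:R))%:E <=
    Aconst F * (\sum_(S : {set 'I_n}) F (\sum_(i in S) dj i) * zj S)%:E)%E.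
Proof.
move=> Fn Fp d0 y01 pm py HD z0 z1 zy.
have [[F0 Fm FI] Fc] := nnc_Gok Fn.
have Gk : Gok F by [].
set D := finset (fun i => dj i != 0) in HD.
have Hpeel : peel mu D y.
  by case: HD => [Hi|Hn]; [exact: indep_peel' | exact: NA_peel].
set T := enum D.
have dD : forall i, i \notin D -> dj i = 0%R.
  by move=> i; rewrite inE negbK => /eqP.
have hsum : forall x : {ffun 'I_n -> bool},
    (\sum_i dj i * (x i)%:R = 0 + \sum_(l <- T) dj l * (x l)%:R)%R.
  move=> x; rewrite add0r /T big_enum /= [RHS]big_mkcond /=.
  apply: eq_bigr => i _; case: ifPn => // /dD ->; by rewrite mul0r.
have S1 : (\sum_x mu x * F (\sum_i dj i * (x i)%:R) <=
    Elist F [seq (y l, dj l) | l <- T] 0)%R.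
  under eq_bigr do rewrite hsum.
  case: pm => _ mu1.
  apply: (L1 Hpeel mu1 y01 FI d0 (enum_uniq _)) => //.
  by move=> l; rewrite mem_enum.
set ss := index_enum {set 'I_n}.
have zs : forall i, y i = (\sum_(X <- ss) (if i \in X then zj X else 0))%R.
  by move=> i; rewrite -zy big_mkcond.
have z01 : forall X, (0 <= zj X <= 1)%R.
  move=> X; rewrite z0 /= -z1 (bigD1 X) //= lerDl.
  by apply: sumr_ge0 => *; exact: z0.
have S2 : (Elist F [seq (y l, dj l) | l <- T] 0 <=
    Elist F [seq (zj X, \sum_(i <- T | i \in X) dj i) | X <- ss] 0)%R.
  have := L2gen (ss := ss) T FI z01 d0 (lexx 0%R).
  have -> : [seq (\sum_(X <- ss) (if i \in X then zj X else 0), dj i) | i <- T] =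
      [seq (y l, dj l) | l <- T] by apply: eq_map => i; rewrite -zs.
  apply; move=> i; rewrite -zs; by case/andP: (y01 i).
set Lz := [seq (zj X, \sum_(i <- T | i \in X) dj i) | X <- ss].
have cSE : forall X : {set 'I_n}, (\sum_(i <- T | i \in X) dj i = \sum_(i in X) dj i)%R.
  move=> X; rewrite /T big_mkcond big_enum /= big_mkcond [RHS]big_mkcond /=.
  apply: eq_bigr => i _; case: ifPn => // /dD ->; by case: ifP.
have okLz : all okp Lz.
  apply/allP => _ /mapP[X _ ->]; rewrite /okp /= z01 /=.
  by rewrite big_seq_cond sumr_ge0.
have lamLz : lam Lz = 1%R by rewrite /lam big_map z1.
apply: le_trans (_ : ((Elist F Lz 0)%:E <= _)%E).
  by rewrite lee_fin; exact: le_trans S1 S2.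
apply: le_trans (Elist_Theta Gk okLz (lexx 0%R)) _.
rewrite /Theta.
set cS := fun X : {set 'I_n} => \sum_(i <- T | i \in X) dj i.
have cS0 : forall X, 0 <= cS X by move=> X; rewrite /cS big_seq_cond sumr_ge0.
apply: le_trans (_ : (\sum_(m <oo) (pp 1 m * \sum_(X <- ss) zj X * F (cS X * m%:R))%:E <= _)%E).
  apply: le_ser.
    by move=> m; rewrite lee_fin mulr_ge0 ?qq_ge0 // Sm_ge0.
  move=> m; rewrite lee_fin.
  have -> : qq Lz m = pp 1 m by rewrite /qq /pp lamLz expr1n div1r mulrC.
  apply: ler_wpM2l; first exact: pp_ge0 ler01.
  apply: le_trans (Sm_jensen m Fc okLz lamLz (lexx 0%R)) _.
  rewrite /Lz big_map; apply: ler_sum => X _ /=.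
  by rewrite add0r (mulrC m%:R).
have E5 : (\sum_(m <oo) (pp 1 m * \sum_(X <- ss) zj X * F (cS X * m%:R))%:E =
    \sum_(X <- ss) (zj X)%:E * \sum_(m <oo) (poisson_pmf 1 m * F (cS X * m%:R))%:E)%E.
  under eq_ser do rewrite big_distrr -sumEFin.
  rewrite nneseries_sum; last first.
    move=> X m _; rewrite lee_fin; apply: mulr_ge0; first exact: pp_ge0 ler01.
    by apply: mulr_ge0 => //; apply: F0; exact: mulr_ge0 (cS0 X) (ler0n _ _).
  apply: eq_bigr => X _; rewrite -serZl; last first.
    move=> m; rewrite lee_fin; apply: mulr_ge0; first exact: poisson_pmf_ge0.
    by apply: F0; exact: mulr_ge0 (cS0 X) (ler0n _ _).
  by apply: eq_ser => m; rewrite -EFinM pp1E; congr (_%:E); rewrite /= mulrCA.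
rewrite E5.
apply: le_trans (_ : (\sum_(X <- ss) (zj X)%:E * (Aconst F * (F (cS X))%:E) <= _)%E).
  apply: lee_sum => X _; apply: lee_wpmul2l; first by rewrite lee_fin z0.
  exact: Psi_le.
rewrite -sumEFin ge0_sume_distrr; last by move=> X _; rewrite lee_fin mulr_ge0 // F0 // sumr_ge0.
apply: lee_sum => X _.
by rewrite /cS cSE EFinM muleCA [X in (_ * X <= _)%E]muleC.
Qed.

End Final.


Unset Implicit Arguments.
Theorem theorem4 (R : realType) (n k m : nat)
  (f : 'I_k -> R -> R) (d : 'I_n -> 'I_k -> R)
  (a : 'I_m -> 'I_n -> R) (b : 'I_m -> R)
  (Rnd : ('I_n -> R) -> {ffun 'I_n -> bool} -> R) :
  (forall j, nonneg_nondec_convex (f j)) ->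
  (forall j t, 0 < t -> 0 < f j t) ->
  (forall i j, 0 <= d i j) ->
  (forall y, polytope a b y -> forall i, 0 <= y i <= 1) ->
  (forall y, polytope a b y ->
     [/\ is_pmf (Rnd y),
         (forall x, 0 < Rnd y x -> polytope a b (ind R x)),
         (forall i, prob1 (Rnd y) i = y i) &
         (forall j, let D := finset (fun i => d i j != 0) in
            indep_on (Rnd y) D \/ neg_assoc_on (Rnd y) D)]) ->
  (forall y z, lp_feasible (polytope a b) y z ->
     ((Ex (Rnd y) (ip_obj f d))%:E <=
        \sum_(j < k) (Aconst (f j) * (lp_cost f d z j)%:E))%E) /\
  (forall (eps : R) y z, 0 <= eps -> lp_feasible (polytope a b) y z ->
     ((lp_obj f d z)%:E <= (1 + eps)%:E * LPval (polytope a b) f d)%E ->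
     ((Ex (Rnd y) (ip_obj f d))%:E <=
        (1 + eps)%:E * (\big[Order.max/0%E]_(j < k) Aconst (f j))
          * IPval (polytope a b) f d)%E).

Proof.
move=> hf hfp hd hy hR.
have part1 : forall y z, lp_feasible (polytope a b) y z ->
   ((Ex (Rnd y) (ip_obj f d))%:E <= \sum_(j < k) (Aconst (f j) * (lp_cost f d z j)%:E))%E.
  move=> y z [Py [z1 [zy z0]]].
  have [pm _ py Hj] := hR y Py.
  rewrite /Ex /ip_obj.
  under eq_bigr do rewrite big_distrr.
  rewrite exchange_big /= -sumEFin.
  apply: lee_sum => j _.
  exact: (per_j (hf j) (hfp j) (fun i => hd i j) (hy y Py) pm py (Hj j) (z0 j) (z1 j) (fun i => zy i j)).
split; first exact: part1.
move=> eps y z eps0 Hf Hlp.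
set Amax := \big[Order.max/0%E]_(j < k) Aconst (f j).
have Amax0 : (0 <= Amax)%E by exact: bigmax_ge_id.
have cost0 : forall j, 0 <= lp_cost f d z j.
  move=> j; case: Hf => _ [_ [_ z0]]; apply: sumr_ge0 => W _.
  case: (hf j) => F0 _; rewrite mulr_ge0 // F0 //.
  by apply: sumr_ge0 => i _.
apply: le_trans (part1 y z Hf) _.
apply: le_trans (_ : (Amax * (lp_obj f d z)%:E <= _)%E).
  rewrite /lp_obj -sumEFin ge0_sume_distrr; last by move=> j _; rewrite lee_fin.
  apply: lee_sum => j _; apply: lee_wpmul2r; first by rewrite lee_fin.
  exact: le_bigmax.
have LPIP : (LPval (polytope a b) f d <= IPval (polytope a b) f d)%E.
  apply/ereal_infP => _ [x Px <-].
  set Xs := [set i | x i]%SET.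
  pose z' := fun (j : 'I_k) (W : {set 'I_n}) => ((W == Xs)%:R : R).
  apply: ge_ereal_inf; exists (lp_obj f d z')%:E; last first.
    rewrite lee_fin le_eqVlt; apply/orP; left; apply/eqP.
    rewrite /lp_obj /ip_obj; apply: eq_bigr => j _.
    rewrite /lp_cost (bigD1 Xs) //= /z' eqxx mulr1 [X in (_ + X)%R]big1 ?addr0; last first.
      by move=> W /negbTE ->; rewrite mulr0.
    congr (f j _); rewrite big_mkcond; apply: eq_bigr => i _.
    by rewrite inE /ind; case: (x i); rewrite ?mulr1 ?mulr0.
  exists (ind R x, z') => //=.
  split => //; split; [|split].
  - move=> j; rewrite (bigD1 Xs) //= /z' eqxx [X in (_ + X)%R]big1 ?addr0 //.
    by move=> W /negbTE ->.
  - move=> i j; rewrite big_mkcond (bigD1 Xs) //= /z' eqxx [X in (_ + X)%R]big1 ?addr0.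
      by rewrite inE /ind; case: (x i).
    by move=> W /negbTE ->; case: ifP.
  - by move=> j W; rewrite /z' ler0n.
apply: le_trans (_ : (Amax * ((1 + eps)%:E * IPval (polytope a b) f d) <= _)%E).
  apply: lee_wpmul2l => //; apply: le_trans Hlp _.
  by apply: lee_wpmul2l => //; rewrite lee_fin addr_ge0.
by rewrite muleCA muleA.
Qed.
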